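(* Let $G$ be a bipartite graph between a hidden set $U$ with $|U|=n$ and an observed set $V$, with edge weights $w(u,v)\in\{-1,+1\}$. For $v\in V$ let $B(v)\subseteq U$ be its set of neighbours and $B^+(v)=\{u\in B(v): w(u,v)=+1\}$. Assume $|B(v)|\le d$ for all $v\in V$. Let $k=\rho n$ be a positive integer, let $S$ be a uniformly random $k$-subset of $U$, $h$ its indicator vector, and $y_v=\operatorname{sgn}\big(\sum_{u\in B(v)}w(u,v)h_u\big)$ for $v\in V$. Let $u\neq v$ in $V$. (a) If $B^+(u)\cap B^+(v)\ne\emptyset$ and $2\rho d\le 0.1$, then $\Pr[y_u=y_v=1]\ge 0.9\rho$. (b) If $B^+(u)\cap B^+(v)=\emptyset$, then $\Pr[y_u=y_v=1]\le \rho^2|B^+(u)|\,|B^+(v)|\le(\rho d)^2$.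
   Context: $\operatorname{sgn}(x)=1$ if $x>0$ and $0$ otherwise. Two observed nodes $u,v$ are called related if they have a common hidden neighbour joined to both by $+1$ edges, i.e. $B^+(u)\cap B^+(v)\neq\emptyset$. *)

(* Defs.v *)
From HB Require Import structures.
From mathcomp Require Import all_boot all_order all_algebra.
Set Implicit Arguments. Unset Strict Implicit. Unset Printing Implicit Defensive.
Import Order.TTheory GRing.Theory Num.Theory.
Local Open Scope ring_scope.

Definition Bplus (n : nat) (V : finType) (B : V -> {set 'I_n})
  (w : 'I_n -> V -> int) (v : V) : {set 'I_n} :=
  [set u in B v | w u v == 1].

Definition sgn (x : int) : int := if 0 < x then 1 else 0.

Definition indic (n : nat) (S : {set 'I_n}) (u : 'I_n) : int := (u \in S)%:R.

Definition yv (n : nat) (V : finType) (B : V -> {set 'I_n})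
  (w : 'I_n -> V -> int) (S : {set 'I_n}) (v : V) : int :=
  sgn (\sum_(u in B v) w u v * indic S u).

Definition probk (n k : nat) (E : {set 'I_n} -> bool) : rat :=
  (#|[set S : {set 'I_n} | (#|S| == k) && E S]|%:R) / ('C(n, k))%:R.

(* Main.v *)
Require Import Defs.
From HB Require Import structures.
From mathcomp Require Import all_boot all_order all_algebra.
From mathcomp Require Import ring lra zify.
Import Order.TTheory GRing.Theory Num.Theory.
Local Open Scope ring_scope.
Set Implicit Arguments. Unset Strict Implicit.

Lemma yv_pos n (V : finType) (B : V -> {set 'I_n}) (w : 'I_n -> V -> int)
  (hw : forall (v : V) (u : 'I_n), u \in B v -> (w u v = 1 \/ w u v = -1))
  (S : {set 'I_n}) x : yv B w S x == 1 -> exists b, (b \in Bplus B w x) && (b \in S).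
Proof.
rewrite /yv /sgn; case: ifP => // hpos _.
have [b hb|hno] := pickP [pred b | (b \in Bplus B w x) && (b \in S)].
  by exists b.
have : \sum_(b in B x) w b x * indic S b <= 0.
  apply: (big_ind (fun y : int => y <= 0)) => //.
    by move=> y z hy hz; lra.
  move=> b hbx; rewrite /indic.
  case hbS: (b \in S); last by rewrite mulr0.
  have := hno b; rewrite /= hbS andbT inE hbx /= => /negbT hne.
  case: (hw _ _ hbx) => e; first by rewrite e eqxx in hne.
  by rewrite e.
by rewrite leNgt hpos.
Qed.

Lemma yv_one n (V : finType) (B : V -> {set 'I_n}) (w : 'I_n -> V -> int)
  (S : {set 'I_n}) x a : a \in Bplus B w x -> a \in S ->
  (forall b, b \in B x -> b != a -> b \notin S) -> yv B w S x = 1.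
Proof.
rewrite inE => /andP[hax /eqP hw1] haS h.
rewrite /yv (bigD1 a) //= big1 => [|b /andP[hb hba]]; last first.
  by rewrite /indic (negbTE (h b hb hba)) mulr0.
by rewrite addr0 /indic haS hw1 mul1r.
Qed.
Lemma card_sup (T:finType) (X : {set T}) k : (#|X| <= k)%N ->
  #|[set S : {set T} | (X \subset S) && (#|S| == k)]| = 'C(#|T| - #|X|, k - #|X|).
Proof.
move=> hX.
have hC : #|~: X| = (#|T| - #|X|)%N by rewrite -(cardsC X) addKn.
rewrite -hC -cards_draws; symmetry.
rewrite -(@card_in_imset _ _ (fun A : {set T} => A :|: X)
  [set A : {set T} | A \subset ~: X & #|A| == (k - #|X|)%N]); last first.
  move=> A1 A2; rewrite !inE => /andP[h1 _] /andP[h2 _] e.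
  have: (A1 :|: X) :\: X = (A2 :|: X) :\: X by rewrite e.
  rewrite !setDUl setDv !setU0.
  by move: h1 h2; rewrite -!disjoints_subset => /setDidPl -> /setDidPl ->.
apply: eq_card => S; rewrite inE; apply/imsetP/andP.
- move=> [A]; rewrite inE => /andP[hA /eqP hAk] ->; split.
    by rewrite subsetUr.
  have hI : A :&: X = set0 by apply/eqP; rewrite setI_eq0 disjoints_subset.
  by rewrite cardsU hI cards0 subn0 hAk subnK.
- move=> [hXS /eqP hS]; exists (S :\: X).
    rewrite inE; apply/andP; split.
      by apply/subsetP => x; rewrite !inE; case/andP.
    by rewrite cardsDS // hS.
  apply/setP => x; rewrite !inE; case: (boolP (x \in X)) => hx /=; [by rewrite (subsetP hXS) | by rewrite orbF].
Qed.

Lemma card_bigcup_le (I T : finType) (P : pred I) (F : I -> {set T}) :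
  (#|\bigcup_(i | P i) F i| <= \sum_(i | P i) #|F i|)%N.
Proof.
elim/big_rec2: _ => [|i x U Pi IH]; first by rewrite cards0.
by apply: leq_trans (leq_card_setU _ _).1 _; rewrite leq_add2l.
Qed.

Lemma N1_eq n k (a : 'I_n) : (0 < k)%N ->
  (#|[set S : {set 'I_n} | (a \in S) && (#|S| == k)]| * n = k * 'C(n, k))%N.
Proof.
move=> hk.
have -> : [set S : {set 'I_n} | (a \in S) && (#|S| == k)] =
   [set S : {set 'I_n} | ([set a] \subset S) && (#|S| == k)].
  by apply/setP => S; rewrite !inE sub1set.
rewrite card_sup cards1 ?card_ord // !subn1 mulnC mul_bin_diag prednK //.
Qed.

Lemma N2_le n k (a b : 'I_n) : a != b ->
  (#|[set S : {set 'I_n} | (a \in S) && (b \in S) && (#|S| == k)]| * n ^ 2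
     <= k ^ 2 * 'C(n, k))%N.
Proof.
move=> hab.
have hn : (2 <= n)%N.
  by have := max_card [set a; b]; rewrite cards2 hab card_ord.
have -> : [set S : {set 'I_n} | (a \in S) && (b \in S) && (#|S| == k)] =
   [set S : {set 'I_n} | ([set a; b] \subset S) && (#|S| == k)].
  by apply/setP => S; rewrite !inE subUset !sub1set.
have [hk|hk] := ltnP k 2.
  rewrite (_ : [set S : {set 'I_n} | _] = set0) ?cards0 //.
  apply/setP => S; rewrite !inE; apply/negbTE; apply/negP => /andP[hs /eqP hS].
  by have := subset_leq_card hs; rewrite cards2 hab hS; lia.
rewrite card_sup cards2 hab ?card_ord //.
case: n a b hab hn => [|[|p]] // a b hab _.
case: k hk => [|[|m]] // _.
rewrite !subSS !subn0.
have [hmp|hmp] := ltnP p m.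
  by rewrite bin_small.
have e1 := mul_bin_diag p.+2 m.+1.
have e2 := mul_bin_diag p.+1 m.
simpl in e1, e2.
set X := 'C(p, m) in e2 *.
set Y := 'C(p.+1, m.+1) in e1 e2 *.
set Z := 'C(p.+2, m.+2) in e1 *.
have e3 : (X * p.+2 * p.+1 = m.+1 * m.+2 * Z)%N.
  transitivity (p.+2 * (p.+1 * X))%N; first ring.
  rewrite e2; transitivity (m.+1 * (p.+2 * Y))%N; first ring.
  by rewrite e1; ring.
have h4 : (p.+2 * m.+1 <= m.+2 * p.+1)%N by nia.
rewrite -(leq_pmul2r (ltn0Sn p)).
have -> : (X * p.+2 ^ 2 * p.+1 = p.+2 * (m.+1 * m.+2 * Z))%N.
  by rewrite -e3; ring.
have -> : (m.+2 ^ 2 * Z * p.+1 = (m.+2 * p.+1) * (m.+2 * Z))%N by ring.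
have -> : (p.+2 * (m.+1 * m.+2 * Z) = (p.+2 * m.+1) * (m.+2 * Z))%N by ring.
by apply: leq_mul.
Qed.
Lemma L1 (a b c e : nat) : (0 < b)%N -> (0 < e)%N -> (a * e <= c * b)%N ->
  a%:R / b%:R <= c%:R / e%:R :> rat.
Proof.
move=> hb he h.
rewrite ler_pdivrMr ?ltr0n // mulrAC ler_pdivlMr ?ltr0n // -!natrM ler_nat.
done.
Qed.
Lemma L2 (a b c e : nat) : (0 < b)%N -> (0 < e)%N ->
  a%:R / b%:R <= c%:R / e%:R :> rat -> (a * e <= c * b)%N.
Proof.
move=> hb he.
rewrite ler_pdivrMr ?ltr0n // mulrAC ler_pdivlMr ?ltr0n // -!natrM ler_nat.
done.
Qed.
Lemma L3 (k n d : nat) : (0 < n)%N -> 2 * (k%:R / n%:R) * d%:R <= 1 / 10%:R :> rat ->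
  (20 * k * d <= n)%N.
Proof.
move=> hn h.
have e : 2 * (k%:R / n%:R) * d%:R = (2 * k * d)%:R / n%:R :> rat.
  rewrite !natrM; field. by rewrite pnatr_eq0 -lt0n.
rewrite e -[1 : rat]/(1%:R) in h.
have := @L2 _ _ _ _ hn (isT : (0 < 10)%N) h. rewrite mul1n => h2. lia.
Qed.

Theorem mainTheorem3 (n : nat) (V : finType) (B : V -> {set 'I_n})
  (w : 'I_n -> V -> int) (d k : nat)
  (hw : forall (v : V) (u : 'I_n), u \in B v -> (w u v = 1 \/ w u v = -1))
  (hd : forall v : V, (#|B v| <= d)%N)
  (hk0 : (0 < k)%N) (hkn : (k <= n)%N)
  (u v : V) (huv : u != v) :
  let rho : rat := k%:R / n%:R in
  let Pr := @probk n k (fun S => (yv B w S u == 1) && (yv B w S v == 1)) in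
  (Bplus B w u :&: Bplus B w v != set0 ->
     2 * rho * d%:R <= 1 / 10%:R -> 9%:R / 10%:R * rho <= Pr) /\
  (Bplus B w u :&: Bplus B w v = set0 ->
     Pr <= rho ^+ 2 * (#|Bplus B w u|)%:R * (#|Bplus B w v|)%:R /\
     rho ^+ 2 * (#|Bplus B w u|)%:R * (#|Bplus B w v|)%:R <= (rho * d%:R) ^+ 2).
Proof.
move=> rho Pr; rewrite /Pr /probk /rho {Pr rho}.
have hn : (0 < n)%N by apply: leq_trans hk0 hkn.
have hC : (0 < 'C(n, k))%N by rewrite bin_gt0.
set E := [set S : {set 'I_n} | _].
pose F2 (a b : 'I_n) := [set S : {set 'I_n} | (a \in S) && (b \in S) && (#|S| == k)].
have hF2 : forall a b, a != b -> (#|F2 a b| * n ^ 2 <= k ^ 2 * 'C(n, k))%N.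
  by move=> a b hab; apply: N2_le.
split.
  case/set0Pn => a; rewrite inE => /andP[hau hav] hrho.
  have h20 := L3 hn hrho.
  pose D := (B u :|: B v) :\ a.
  pose A1 := [set S : {set 'I_n} | (a \in S) && (#|S| == k)].
  have hN1 : (#|A1| * n = k * 'C(n, k))%N by apply: N1_eq.
  have hsub : A1 \subset E :|: \bigcup_(b in D) F2 a b.
    apply/subsetP => S; rewrite inE => /andP[haS hS].
    rewrite inE; case: (boolP [exists b in D, b \in S]).
      case/exists_inP => b hbD hbS; apply/orP; right.
      apply/bigcupP; exists b => //; rewrite inE haS hbS hS.
      done.
    rewrite negb_exists_in => /forall_inP hno; apply/orP; left.
    rewrite inE hS /=.
    rewrite (yv_one (a := a)) // ?(yv_one (a := a)) //.
      move=> b hb hba; apply: hno; rewrite !inE hba hb orbT. done.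
    move=> b hb hba; apply: hno; rewrite !inE hba hb. done.
  have hA1 : (#|A1| <= #|E| + \sum_(b in D) #|F2 a b|)%N.
    apply: leq_trans (subset_leq_card hsub) _.
    apply: leq_trans (leq_card_setU _ _).1 _.
    by rewrite leq_add2l card_bigcup_le.
  have hD : (#|D| <= 2 * d)%N.
    have h1 : (#|D| <= #|B u :|: B v|)%N by apply: subset_leq_card; rewrite /D subsetDl.
    have h2 := (leq_card_setU (B u) (B v)).1.
    have := hd u; have := hd v; lia.
  have hM : ((\sum_(b in D) #|F2 a b|) * n ^ 2 <= #|D| * (k ^ 2 * 'C(n, k)))%N.
    rewrite big_distrl /= -sum_nat_const; apply: leq_sum => b.
    by rewrite !inE => /andP[hba _]; apply: hF2; rewrite eq_sym.
  set M := \sum_(b in D) #|F2 a b| in hA1 hM.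
  set N1 := #|A1| in hN1 hA1.
  set e := #|E| in hA1 *.
  set c := 'C(n, k) in hN1 hM hC *.
  have s1 : (n * (k * c) <= n * n * e + 2 * d * k * k * c)%N.
    rewrite -hN1.
    have : (N1 * n * n <= (e + M) * n * n)%N by rewrite !leq_mul2r hA1 !orbT.
    have : (#|D| * (k ^ 2 * c) <= 2 * d * (k ^ 2 * c))%N by rewrite leq_mul2r hD orbT.
    nia.
  have s2 : (10 * (2 * d * k * k * c) <= n * (k * c))%N.
    have : (20 * k * d * (k * c) <= n * (k * c))%N by rewrite leq_mul2r h20 orbT.
    nia.
  have s3 : (n * (9 * k * c) <= n * (10 * n * e))%N by nia.
  rewrite leq_pmul2l // in s3.
  rewrite mulf_div -!natrM; apply: L1 => //; first by rewrite muln_gt0.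
  move: s3; nia.
move=> hI.
have hAd : (#|Bplus B w u| <= d)%N.
  apply: leq_trans (hd u); apply: subset_leq_card; apply/subsetP => x.
  by rewrite inE => /andP[].
have hCd : (#|Bplus B w v| <= d)%N.
  apply: leq_trans (hd v); apply: subset_leq_card; apply/subsetP => x.
  by rewrite inE => /andP[].
split; last first.
  rewrite (exprMn 2 (k%:R / n%:R : rat)) -mulrA; apply: ler_wpM2l.
    by apply: exprn_ge0; rewrite divr_ge0 ?ler0n.
  rewrite -natrX -natrM ler_nat (expnS d) expn1; exact: leq_mul.
have hsub : E \subset \bigcup_(p in setX (Bplus B w u) (Bplus B w v)) F2 p.1 p.2.
  apply/subsetP => S; rewrite inE => /andP[hS /andP[hyu hyv]].
  have [a /andP[ha haS]] := yv_pos hw hyu.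
  have [c /andP[hc hcS]] := yv_pos hw hyv.
  apply/bigcupP; exists (a, c); first by rewrite in_setX ha hc.
  by rewrite inE /= haS hcS hS.
have hE := leq_trans (subset_leq_card hsub) (card_bigcup_le _ _).
have hM : ((\sum_(p in setX (Bplus B w u) (Bplus B w v)) #|F2 p.1 p.2|) * n ^ 2
     <= #|setX (Bplus B w u) (Bplus B w v)| * (k ^ 2 * 'C(n, k)))%N.
  rewrite big_distrl /= -sum_nat_const; apply: leq_sum => [[a c]].
  rewrite in_setX /= => /andP[ha hc]; apply: hF2.
  apply/negP => /eqP hac; subst c.
  have : a \in Bplus B w u :&: Bplus B w v by rewrite inE ha hc.
  by rewrite hI inE.
rewrite cardsX in hM.
have -> : (k%:R / n%:R) ^+ 2 * (#|Bplus B w u|)%:R * (#|Bplus B w v|)%:R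
   = (k ^ 2 * #|Bplus B w u| * #|Bplus B w v|)%N%:R / (n ^ 2)%N%:R :> rat.
  rewrite !natrM; field; by rewrite pnatr_eq0 -lt0n.
apply: L1 => //; first by rewrite expn_gt0 hn.
apply: leq_trans (leq_mul hE (leqnn (n ^ 2))) _.
apply: leq_trans hM _.
move: #|Bplus B w u| #|Bplus B w v| 'C(n, k) (k ^ 2)%N => x y z q.
by apply: eq_leq; ring.
Qed.
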